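(* Let $(\eta_k)_{k\in\mathbb{N}}$ be independent identically distributed random variables with values in $\mathbb{N}$, $P(\eta_k=m)=p_m$ ($p_m\ge0$, $\sum_{m=1}^\infty p_m=1$), and let $$\eta=\sum_{k=1}^\infty\frac{(-1)^{k-1}}{\eta_1(\eta_1+\eta_2)\cdots(\eta_1+\eta_2+\dots+\eta_k)}.$$ Then: (1) if $p_i=1$ for some $i\in\mathbb{N}$, the distribution of $\eta$ is degenerate (concentrated at one point); (2) in all other cases the distribution of $\eta$ is purely singularly continuous (i.e. it has no atoms and is singular with respect to Lebesgue measure). *)

(* Defs.v *)
From HB Require Import structures.
From mathcomp Require Import all_boot all_order all_algebra.
From mathcomp Require Import all_classical all_reals all_analysis.
Set Implicit Arguments. Unset Strict Implicit. Unset Printing Implicit Defensive.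
Import Order.TTheory GRing.Theory Num.Theory numFieldNormedType.Exports.
Local Open Scope classical_set_scope.
Local Open Scope ring_scope.

(* Mutual independence of a sequence of N-valued random variables:
   for every finite set of distinct indices s and every family of
   (necessarily measurable, N carries the discrete sigma-algebra) sets A_k,
   P (/\_{k in s} {X_k in A_k}) = prod_{k in s} P {X_k in A_k}. *)
Definition mutually_independent_nat {d} {T : measurableType d} {R : realType}
  (P : probability T R) (X : nat -> T -> nat) : Prop :=
  forall (s : seq nat) (A : nat -> set nat), uniq s ->
    P (\bigcap_(k in [set` s]) (X k @^-1` A k)) =
    (\prod_(k <- s) P (X k @^-1` A k))%E.

(* The random variable
   eta = sum_{k>=1} (-1)^(k-1) / (eta_1 (eta_1+eta_2) ... (eta_1+...+eta_k)),
   written with 0-based indices: term k is (-1)^k / prod_{i<=k} (sum_{j<=i} X_j). *)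
Definition eta_series {T : Type} {R : realType} (X : nat -> T -> nat) (w : T) : R :=
  limn (fun n : nat => (\sum_(k < n) ((-1) ^+ k / \prod_(i < k.+1) ((\sum_(j < i.+1) X j w)%N)%:R) : R)).

(* Main.v *)
Require Import Defs.
From HB Require Import structures.
From mathcomp Require Import all_boot all_order all_algebra.
From mathcomp Require Import all_classical all_reals all_analysis.
From mathcomp Require Import ring lra zify.
Import Order.TTheory GRing.Theory Num.Theory numFieldNormedType.Exports.
Local Open Scope classical_set_scope.
Local Open Scope ring_scope.
Set Implicit Arguments. Unset Strict Implicit. Unset Printing Implicit Defensive.
Section Series.
Variable R : realType.

Definition psum (s : nat) (a : nat -> nat) (n : nat) : R :=
  \sum_(k < n) ((-1) ^+ k / \prod_(i < k.+1) ((s + \sum_(j < i.+1) a j)%N)%:R).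

Lemma psum0 s a : psum s a 0 = 0.
Proof. by rewrite /psum big_ord0. Qed.

Lemma psumS s a n : psum s a n.+1 =
  (1 - psum (s + a 0)%N (fun j => a j.+1) n) / ((s + a 0)%N)%:R.
Proof.
rewrite /psum big_ord_recl /= big_ord1 big_ord1 expr0.
rewrite mulrBl div1r; congr (_ + _).
rewrite -mulNr -sumrN mulr_suml; apply: eq_bigr => k _.
rewrite /bump /= add1n big_ord_recl /= big_ord1.
have -> : \prod_(i < k.+1) ((s + \sum_(j < (lift ord0 i).+1) a j)%N)%:R
   = \prod_(i < k.+1) ((s + a 0 + \sum_(j < i.+1) a j.+1)%N)%:R :> R.
  by apply: eq_bigr => i _; rewrite /= big_ord_recl /= addnA.
rewrite exprS invfM; ring.
Qed.

Lemma inv_nat_le1 k : (0 < k)%N -> ((k%:R : R)^-1) <= 1.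
Proof. by move=> k0; rewrite invf_le1 ?ler1n ?ltr0n. Qed.

Lemma inv_nat_ge0 k : 0 <= ((k%:R : R)^-1).
Proof. by rewrite invr_ge0 ler0n. Qed.

Lemma le_inv_nat k l : (0 < k)%N -> (k <= l)%N -> ((l%:R : R)^-1) <= (k%:R)^-1.
Proof.
move=> k0 kl; rewrite lef_pV2 ?ler_nat // posrE ltr0n //.
exact: leq_trans kl.
Qed.

Definition apos (a : nat -> nat) := forall j, (0 < a j)%N.

Lemma apos_shift a : apos a -> apos (fun j => a j.+1).
Proof. by move=> h j. Qed.

Lemma psum_bnd s a n : apos a ->
  0 <= psum s a n /\ psum s a n <= (((s + a 0)%N)%:R)^-1.
Proof.
elim: n s a => [|n IH] s a Ha.
  by rewrite psum0 lexx inv_nat_ge0.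
rewrite psumS; have [h1 h2] := IH (s + a 0)%N _ (apos_shift Ha).
have y1 : psum (s + a 0) (fun j => a j.+1) n <= 1.
  apply: (le_trans h2); apply: inv_nat_le1.
  by rewrite addn_gt0 (Ha 1%N) orbT.
split.
  by apply: mulr_ge0; [rewrite subr_ge0 | exact: inv_nat_ge0].
rewrite -[X in _ <= X]mul1r; apply: ler_wpM2r; first exact: inv_nat_ge0.
by rewrite lerBlDr lerDl.
Qed.

Lemma psum_le1 s a n : apos a -> psum s a n <= 1.
Proof.
move=> Ha; have [_ h] := psum_bnd s n Ha; apply: (le_trans h).
by apply: inv_nat_le1; rewrite addn_gt0 (Ha 0%N) orbT.
Qed.

Lemma psum_diff s a m n : apos a ->
  psum s a m.+1 - psum s a n.+1 =
  (psum (s + a 0) (fun j => a j.+1) n - psum (s + a 0) (fun j => a j.+1) m)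
   * (((s + a 0)%N)%:R)^-1.
Proof. by move=> Ha; rewrite !psumS; ring. Qed.

Lemma psum_cauchy1 n s a m : (0 < s)%N -> apos a -> (n <= m)%N ->
  `|psum s a m - psum s a n| <= (2 ^+ n)^-1.
Proof.
elim: n s a m => [|n IH] s a m s0 Ha nm.
  rewrite psum0 subr0 expr0 invr1 ger0_norm; last by case: (psum_bnd s m Ha).
  exact: psum_le1.
case: m nm => [//|m] nm.
rewrite psum_diff // normrM (ger0_norm (inv_nat_ge0 _)).
rewrite exprS invfM [X in _ <= X]mulrC; apply: ler_pM.
- exact: normr_ge0.
- exact: inv_nat_ge0.
- rewrite distrC; apply: (IH _ _ _ _ (apos_shift Ha)) => //.
  by rewrite addn_gt0 s0.
- have -> : (2 : R) = (2%N)%:R by [].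
  apply: le_inv_nat => //.
  exact: (leq_add s0 (Ha 0%N)).
Qed.

Lemma psum_cauchy n s a m : apos a -> (n <= m)%N ->
  `|psum s a m - psum s a n| <= 2 * (2 ^+ n)^-1.
Proof.
move=> Ha; case: n => [|n] nm.
  rewrite psum0 subr0 expr0 invr1 ger0_norm; last by case: (psum_bnd s m Ha).
  by apply: (le_trans (psum_le1 s m Ha)); rewrite mulr1 ler1n.
case: m nm => [//|m] nm.
rewrite psum_diff // normrM (ger0_norm (inv_nat_ge0 _)).
rewrite exprS invfM mulrA mulfV ?mul1r; last by [].
rewrite -[X in _ <= X]mulr1; apply: ler_pM.
- exact: normr_ge0.
- exact: inv_nat_ge0.
- rewrite distrC; apply: (psum_cauchy1 _ (apos_shift Ha)) => //.
  by rewrite addn_gt0 (Ha 0%N) orbT.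
- by apply: inv_nat_le1; rewrite addn_gt0 (Ha 0%N) orbT.
Qed.

Lemma two_pow_small (e : R) : 0 < e -> exists N, 2 * (2 ^+ N)^-1 < e.
Proof.
move=> e0; have h0 : 0 <= 2 / e by rewrite divr_ge0 // ltW.
have hb := archi_boundP h0.
exists (Num.Def.archi_bound (2 / e)).
set N := Num.Def.archi_bound (2 / e) in hb *.
have hN : (N%:R : R) <= 2 ^+ N.
  by rewrite -natrX ler_nat; apply: ltnW; apply: ltn_expl.
have : 2 / e < 2 ^+ N by apply: (lt_le_trans hb).
rewrite ltr_pdivrMr // => h.
by rewrite ltr_pdivrMr ?exprn_gt0 // mulrC.
Qed.

Lemma psum_cvg s a : apos a -> cvgn (psum s a).
Proof.
move=> Ha; apply/cauchy_cvgP/cauchyP => e e0.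
have [N HN] := two_pow_small e0.
exists (psum s a N); exists N => // n /= Nn.
rewrite /ball /=; apply: le_lt_trans HN.
by rewrite distrC; exact: psum_cauchy.
Qed.

Definition F s a : R := limn (psum s a).

Lemma F_bnd s a : apos a -> 0 <= F s a /\ F s a <= (((s + a 0)%N)%:R)^-1.
Proof.
move=> Ha; split.
  by apply: limr_ge; [exact: psum_cvg | apply: nearW => n; case: (psum_bnd s n Ha)].
by apply: limr_le; [exact: psum_cvg | apply: nearW => n; case: (psum_bnd s n Ha)].
Qed.

Lemma F_rec s a : apos a ->
  F s a = (1 - F (s + a 0) (fun j => a j.+1)) / ((s + a 0)%N)%:R.
Proof.
move=> Ha; apply: cvg_lim => //.
rewrite -cvg_shiftS.
rewrite /=.
have -> : (fun n => psum s a n.+1) =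
   (fun n => (1 - psum (s + a 0) (fun j => a j.+1) n) / ((s + a 0)%N)%:R).
  by apply/funext => n; rewrite psumS.
apply: cvgM; last exact: cvg_cst.
apply: cvgB; first exact: cvg_cst.
exact: psum_cvg (apos_shift Ha).
Qed.

Lemma F_tail s a : apos a ->
  F (s + a 0) (fun j => a j.+1) = 1 - ((s + a 0)%N)%:R * F s a.
Proof.
move=> Ha; rewrite [in RHS](F_rec s Ha).
have c0 : ((s + a 0)%N)%:R != 0 :> R.
  by rewrite pnatr_eq0 -lt0n addn_gt0 (Ha 0%N) orbT.
by rewrite mulrCA mulfV // mulr1 opprB addrC subrK.
Qed.

Lemma c_pos s a : apos a -> 0 < (((s + a 0)%N)%:R : R).
Proof. by move=> Ha; rewrite ltr0n addn_gt0 (Ha 0%N) orbT. Qed.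

Lemma F_aux (c y : R) : 0 < c -> y <= (c + 1)^-1 -> (c + 1)^-1 <= (1 - y) / c.
Proof.
move=> c0 hy; rewrite ler_pdivlMr //.
have c1 : c + 1 != 0 by rewrite gt_eqF // addr_gt0.
have e : (c + 1)^-1 * c = 1 - (c + 1)^-1 by field.
rewrite e; lra.
Qed.

Lemma F_aux_strict (c y : R) : 0 < c -> y < (c + 1)^-1 -> (c + 1)^-1 < (1 - y) / c.
Proof.
move=> c0 hy; rewrite ltr_pdivlMr //.
have c1 : c + 1 != 0 by rewrite gt_eqF // addr_gt0.
have e : (c + 1)^-1 * c = 1 - (c + 1)^-1 by field.
rewrite e; lra.
Qed.

Lemma tail_le s a : apos a ->
  (((s + a 0 + a 1)%N)%:R : R)^-1 <= (((s + a 0)%N)%:R + 1)^-1.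
Proof.
move=> Ha; rewrite natr1; apply: le_inv_nat => //.
by rewrite -[X in (X < _)%N]addn0 ltn_add2l (Ha 1%N).
Qed.

Lemma F_lb s a : apos a -> (((s + a 0)%N)%:R + 1)^-1 <= F s a.
Proof.
move=> Ha; rewrite (F_rec s Ha); apply: F_aux; first exact: c_pos.
have [_ h] := F_bnd (s + a 0) (apos_shift Ha).
exact: (le_trans h (tail_le s Ha)).
Qed.

Lemma F_gt0 s a : apos a -> 0 < F s a.
Proof.
move=> Ha; apply: lt_le_trans (F_lb s Ha).
by rewrite invr_gt0 addr_gt0 // c_pos.
Qed.

Lemma F_ub_strict s a : apos a -> F s a < (((s + a 0)%N)%:R)^-1.
Proof.
move=> Ha; rewrite (F_rec s Ha) -[X in _ < X]mul1r.
rewrite ltr_pM2r ?invr_gt0 ?c_pos //.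
by rewrite gtrDl oppr_lt0 (F_gt0 _ (apos_shift Ha)).
Qed.

Lemma F_lb_strict s a : apos a -> (((s + a 0)%N)%:R + 1)^-1 < F s a.
Proof.
move=> Ha; rewrite (F_rec s Ha); apply: F_aux_strict; first exact: c_pos.
have h := F_ub_strict (s + a 0) (apos_shift Ha).
exact: (lt_le_trans h (tail_le s Ha)).
Qed.

Lemma digit_unique (x : R) (c c' : nat) : (0 < c)%N -> (0 < c')%N ->
  (c%:R + 1)^-1 < x < (c%:R)^-1 -> (c'%:R + 1)^-1 < x < (c'%:R)^-1 -> c = c'.
Proof.
move=> c0 c'0 /andP[h1 h2] /andP[h3 h4].
have key : forall u v : nat, (0 < u)%N -> (u < v)%N ->
    (u%:R + 1)^-1 < x -> x < (v%:R : R)^-1 -> False.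
  move=> u v u0 uv hu hv.
  have : (v%:R : R)^-1 <= (u%:R + 1)^-1.
    by rewrite natr1; apply: le_inv_nat.
  move=> hle; have := lt_trans hv (le_lt_trans hle hu).
  by rewrite ltxx.
case: (ltngtP c c') => // h.
  by case: (key _ _ c0 h h1 h4).
by case: (key _ _ c'0 h h3 h2).
Qed.

Lemma F_inj0 s a b : apos a -> apos b -> F s a = F s b -> a 0%N = b 0%N.
Proof.
move=> Ha Hb E.
apply/eqP; rewrite -(eqn_add2l s); apply/eqP.
apply: (@digit_unique (F s a)).
- by rewrite addn_gt0 (Ha 0%N) orbT.
- by rewrite addn_gt0 (Hb 0%N) orbT.
- by rewrite F_lb_strict // F_ub_strict.
- by rewrite E F_lb_strict // F_ub_strict.
Qed.

Lemma F_inj s a b : apos a -> apos b -> F s a = F s b -> forall j, a j = b j.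
Proof.
move=> Ha Hb E j; elim: j s a b Ha Hb E => [|j IH] s a b Ha Hb E.
  exact: F_inj0 Ha Hb E.
have h0 := F_inj0 Ha Hb E.
apply: (IH (s + a 0)%N (fun j => a j.+1) (fun j => b j.+1) (apos_shift Ha) (apos_shift Hb)).
by rewrite (F_tail s Ha) {2}h0 (F_tail s Hb) E h0.
Qed.

Local Notation mu := (@lebesgue_measure R).

Definition psi (c : nat) (x : R) : R := 1 - c%:R * x.

Lemma psi_meas c : measurable_fun setT (psi c).
Proof.
have -> : psi c = (cst 1) \- ((cst c%:R) \* id) by [].
apply: measurable_realfun.measurable_funB => //.
exact: measurable_realfun.measurable_funM.
Qed.

Lemma psi_preimage_meas c (Y : set R) : measurable Y -> measurable (psi c @^-1` Y).
Proof. by move=> mY; rewrite -[X in measurable X]setTI; apply: psi_meas. Qed.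

Lemma psi_measR c : @measurable_fun _ _ (measurableTypeR R) (measurableTypeR R) setT (psi c).
Proof. exact: psi_meas. Qed.

Definition PF c := measure_function_pushforward__canonical__measure_function_Measure mu (psi_measR c).

Lemma scale_eq c : (0 < c)%N -> forall Y : set R, measurable Y ->
   mu Y = mscale ((c%:R : R)%:nng) (PF c) Y.
Proof.
move=> c0; apply: lebesgue_measure_unique => _ [[a b]] _ <-.
rewrite /mscale /=.
have k0 : 0 < (c%:R : R) by rewrite ltr0n.
have E : psi c @^-1` `]a, b]%classic = `[(1 - b) / c%:R, (1 - a) / c%:R[%classic.
  apply/seteqP; split => x /=; rewrite !in_itv /= /psi => /andP[h1 h2]; apply/andP; split.
  - by rewrite ler_pdivrMr //; lra.
  - by rewrite ltr_pdivlMr //; lra.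
  - by move: h2; rewrite ltr_pdivlMr //; lra.
  - by move: h1; rewrite ler_pdivrMr //; lra.
have -> : mscale ((c%:R : R)%:nng) (PF c) `]a, b] = ((c%:R)%:E * mu (psi c @^-1` `]a, b]))%E by [].
rewrite E !lebesgue_measure_itv /= !lte_fin.
have -> : ((1 - b) / c%:R < (1 - a) / c%:R) = (a < b).
  by rewrite ltr_pM2r ?invr_gt0 // ltrD2l ltrN2.
case: ifP => _; last by rewrite mule0.
rewrite -!EFinD -EFinM; congr (_%:E).
have k1 : (c%:R : R) != 0 by rewrite gt_eqF.
by field.
Qed.

Lemma mu_psi c (Y : set R) : (0 < c)%N -> measurable Y ->
  mu (psi c @^-1` Y) = (((c%:R : R)^-1)%:E * mu Y)%E.
Proof.
move=> c0 mY; rewrite (scale_eq c0 mY).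
have -> : mscale ((c%:R : R)%:nng) (PF c) Y = ((c%:R)%:E * mu (psi c @^-1` Y))%E by [].
have k1 : (c%:R : R) != 0 by rewrite pnatr_eq0 -lt0n.
by rewrite muleA -EFinM mulVf // mul1e.
Qed.

Definition phi (c : nat) (Y : set R) : set R :=
  `](c%:R + 1)^-1, (c%:R)^-1[%classic `&` (psi c @^-1` Y).

Lemma phi_meas c Y : measurable Y -> measurable (phi c Y).
Proof.
move=> mY; apply: measurableI; first exact: measurable_itv.
exact: psi_preimage_meas.
Qed.

Lemma mu_phi c Y : (0 < c)%N -> measurable Y ->
  (mu (phi c Y) <= ((c%:R : R)^-1)%:E * mu Y)%E.
Proof.
move=> c0 mY; rewrite -mu_psi //; apply: le_measure.
- by rewrite inE; exact: phi_meas.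
- by rewrite inE; exact: psi_preimage_meas.
- by move=> x [].
Qed.

Lemma inv_diff (k : R) : 0 < k -> k^-1 - (k + 1)^-1 = (k * (k + 1))^-1.
Proof.
move=> k0; have k1 : k != 0 by rewrite gt_eqF.
have k2 : k + 1 != 0 by rewrite gt_eqF // addr_gt0.
by field; rewrite k1 k2.
Qed.

Lemma mu_phiT c : (0 < c)%N ->
  (mu (phi c setT) <= (((c * c.+1)%N%:R : R)^-1)%:E)%E.
Proof.
move=> c0; apply: (@le_trans _ _ (mu `](c%:R + 1)^-1, (c%:R)^-1[%classic)).
  apply: le_measure.
  - by rewrite inE; apply: phi_meas.
  - by rewrite inE; exact: measurable_itv.
  - by move=> x [].
rewrite lebesgue_measure_itv /= lte_fin.
have k0 : 0 < (c%:R : R) by rewrite ltr0n.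
have -> : ((c%:R + 1)^-1 < (c%:R : R)^-1) = true.
  by apply/idP; rewrite ltf_pV2 ?posrE ?ltrDl // addr_gt0.
rewrite -EFinD lee_fin natrM -natr1.
have k1 : (c%:R : R) != 0 by rewrite gt_eqF.
have k2 : (c%:R + 1 : R) != 0 by rewrite gt_eqF // addr_gt0.
by rewrite inv_diff.

Qed.

Lemma phi_mem c Y x : phi c Y x <-> ((c%:R + 1)^-1 < x < (c%:R)^-1 /\ Y (psi c x)).
Proof. by rewrite /phi /= in_itv. Qed.

Lemma phi_digit c Y s a : apos a -> (0 < c)%N -> phi c Y (F s a) -> c = (s + a 0)%N.
Proof.
move=> Ha c0 /phi_mem [h _]; apply: (digit_unique c0 _ h).
  by rewrite addn_gt0 (Ha 0%N) orbT.
by rewrite F_lb_strict // F_ub_strict.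
Qed.

Lemma F_in_phi Y s a : apos a ->
  phi (s + a 0) Y (F s a) <-> Y (F (s + a 0) (fun j => a j.+1)).
Proof.
move=> Ha; rewrite phi_mem /psi -F_tail // F_lb_strict // F_ub_strict //.
by split => [[]|].
Qed.

Fixpoint Aset (m n s : nat) : set R :=
  match n with
  | 0 => phi (s + m) setT
  | n'.+1 => \bigcup_d phi (s + d.+1) (Aset m n' (s + d.+1))
  end.

Lemma Aset_meas m n s : measurable (Aset m n s).
Proof.
elim: n s => [|n IH] s /=; first exact: phi_meas.
by apply: bigcupT_measurable => d; apply: phi_meas.
Qed.

Lemma Aset_mem m n s a : apos a -> (0 < m)%N -> (Aset m n s (F s a) <-> a n = m).
Proof.
move=> Ha m0; elim: n s a Ha => [|n IH] s a Ha /=.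
  split.
    move=> h; have := phi_digit Ha _ h; rewrite addn_gt0 m0 orbT => /(_ isT).
    by move/eqP; rewrite eqn_add2l => /eqP.
  by move=> h; rewrite -h F_in_phi.
split.
  move=> [d _ hd]; have sd : (0 < s + d.+1)%N by rewrite addnS.
  have e := @phi_digit (s + d.+1) _ s a Ha sd hd.
  rewrite e F_in_phi // in hd.
  by have := (IH _ _ (apos_shift Ha)).1 hd.
move=> h; exists (a 0).-1 => //.
rewrite prednK ?(Ha 0%N) // F_in_phi //.
exact: (IH _ _ (apos_shift Ha)).2.
Qed.

Lemma tele_bound (s : nat) (K : R) : 0 <= K ->
  (\sum_(0 <= d <oo) ((K * ((((s + d.+1) * (s + d.+1).+1)%N)%:R)^-1))%:E
    <= (K * ((s.+1)%:R)^-1)%:E)%E.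
Proof.
move=> K0; apply: lime_le.
  apply: is_cvg_nneseries => n _ _; rewrite lee_fin.
  by apply: mulr_ge0 => //; exact: inv_nat_ge0.
apply: nearW => N; rewrite sumEFin lee_fin -mulr_sumr.
apply: ler_wpM2l => //.
rewrite (@telescope_sumr_eq _ 0 N (fun k => - (((s + k).+1)%:R : R)^-1)) //.
  rewrite addn0 opprK addrC lerBlDr lerDl.
  exact: inv_nat_ge0.
move=> k _; rewrite !addnS opprK addrC.
set c := (s + k).+1.
by rewrite natrM -natr1 inv_diff // ltr0n.
Qed.

Lemma Aset_mu m n s : (0 < m)%N ->
  (mu (Aset m n s) <= (((((s + n).+1 * s.+1)%N)%:R : R)^-1)%:E)%E.
Proof.
move=> m0; elim: n s => [|n IH] s /=.
  apply: le_trans (mu_phiT _) _ ; first by rewrite addn_gt0 m0 orbT.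
  rewrite lee_fin addn0; apply: le_inv_nat; first by rewrite muln_gt0.
  apply: leq_mul; first by rewrite -addn1 leq_add2l.
  by rewrite ltnS leq_addr.
apply: (le_trans (measure_sigma_subadditive _ _ _ (@subset_refl _ _))).
- by move=> d; apply: phi_meas; exact: Aset_meas.
- by apply: bigcupT_measurable => d; apply: phi_meas; exact: Aset_meas.
set K := ((((s + n.+1).+1)%N)%:R : R)^-1.
rewrite natrM invfM -/K.
apply: le_trans (tele_bound s (inv_nat_ge0 _)).
apply: lee_nneseries => [d _ _|d _]; first exact: measure_ge0.
have cd : (0 < s + d.+1)%N by rewrite addnS.
apply: le_trans (mu_phi cd (Aset_meas _ _ _)) _.
apply: le_trans (lee_wpmul2l _ (IH _)) _; first by rewrite lee_fin inv_nat_ge0.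
rewrite -EFinM lee_fin !natrM !invfM mulrCA; apply: ler_wpM2r.
  by apply: mulr_ge0; exact: inv_nat_ge0.
apply: le_inv_nat => //.
lia.
Qed.

Lemma ereal_geo0 (e : \bar R) (r : R) : (0 <= e)%E -> 0 <= r -> r < 1 ->
  (forall k, (e <= (r ^+ k)%:E)%E) -> e = 0%E.
Proof.
move=> e0 r0 r1 he.
case: e e0 he => [x| |] // x0 he.
  have hr : `|r| < 1 by rewrite ger0_norm.
  have hc := cvg_expr hr.
  have h : x <= limn (fun k => r ^+ k).
    apply: limr_ge; first by apply/cvg_ex; exists 0.
    by apply: nearW => k; have := he k; rewrite lee_fin.
  rewrite (cvg_lim _ hc) // in h.
  by congr (_%:E); apply/eqP; rewrite eq_le h -lee_fin.
by have := he 0%N; rewrite expr0.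
Qed.

Lemma ereal_harm0 (e : \bar R) : (0 <= e)%E ->
  (forall J, (e <= (((J.+1)%:R : R)^-1)%:E)%E) -> e = 0%E.
Proof.
move=> e0 he; apply: (@ereal_geo0 e (2^-1)) => //.
  by rewrite invf_lt1 // ltr1n.
move=> k; have := he (2 ^ k).-1.
rewrite prednK ?expn_gt0 // natrX exprVn.
by [].
Qed.
End Series.
Lemma eta_F (R : realType) (T : Type) (X : nat -> T -> nat) w :
  eta_series X w = F R 0 (fun j => X j w) :> R.
Proof. by []. Qed.

Section Prob.
Variables (d : measure_display) (T : measurableType d) (R : realType).
Variables (P : probability T R) (X : nat -> T -> nat) (p : nat -> R).
Hypothesis HXmeas : forall k, measurable_fun setT (X k).
Hypothesis HXpos : forall k w, (0 < X k w)%N.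
Hypothesis Hlaw : forall k m, (0 < m)%N -> P (X k @^-1` [set m]) = (p m)%:E.
Hypothesis Hind : mutually_independent_nat P X.

Lemma mpre k (A : set nat) : measurable (X k @^-1` A).
Proof. by rewrite -[X in measurable X]setTI; apply: HXmeas. Qed.

Lemma aposX w : apos (fun j => X j w).
Proof. by move=> j; apply: HXpos. Qed.

Lemma P_one_of_C (A : set T) : measurable A -> P (~` A) = 0%E -> P A = 1%E.
Proof.
move=> mA h; have := probability_setC P mA; rewrite h.
have hf : (0 <= P A)%E /\ (P A <= 1)%E by split; [apply: measure_ge0 | apply: probability_le1].
move: hf; case: (P A) => [x| |] //= [h0 h1] /eqP.
rewrite eq_sym -EFinB eqe subr_eq0 => /eqP <-.
by [].
Qed.

Lemma P_bigcap_one (E : nat -> set T) : (forall J, measurable (E J)) ->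
  (forall J, P (E J) = 1%E) -> P (\bigcap_J E J) = 1%E.
Proof.
move=> mE hE; apply: P_one_of_C; first exact: bigcapT_measurable.
apply/eqP; rewrite eq_le measure_ge0 andbT.
rewrite setC_bigcap.
have mC : forall J, measurable (~` E J) by move=> J; exact: measurableC.
have hh : (P (\bigcup_J ~` E J) <= \sum_(0 <= J <oo) P (~` E J))%E.
  by apply: measure_sigma_subadditive => //; exact: bigcupT_measurable.
apply: le_trans hh _.
rewrite eseries0 // => J _ _.
by rewrite probability_setC // hE subee.
Qed.

Lemma p_le1 m : (0 < m)%N -> p m <= 1.
Proof. by move=> m0; rewrite -lee_fin -(Hlaw 0 m0); apply: probability_le1; exact: mpre. Qed.

Lemma p_ge0 m : (0 < m)%N -> 0 <= p m.
Proof. by move=> m0; rewrite -lee_fin -(Hlaw 0 m0); apply: measure_ge0. Qed.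

Lemma p_sum2 m m' : (0 < m)%N -> (0 < m')%N -> m != m' -> p m + p m' <= 1.
Proof.
move=> m0 m'0 mm; rewrite -lee_fin EFinD -(Hlaw 0 m0) -(Hlaw 0 m'0).
rewrite -measureU; first by apply: probability_le1; apply: measurableU; exact: mpre.
- exact: mpre.
- exact: mpre.
apply/seteqP; split => w //= [h1 h2].
by move: mm; rewrite -h1 h2 eqxx.
Qed.

Lemma mbigcap_seq (s : seq nat) (A : nat -> set nat) :
  measurable (\bigcap_(k in [set` s]) X k @^-1` A k).
Proof.
case: s => [|a s].
  rewrite (_ : [set` [::]] = set0); first by rewrite bigcap_set0.
  by apply/seteqP; split => x.
apply: bigcap_measurable; last by move=> k _; exact: mpre.
by exists a; rewrite /= inE eqxx.
Qed.

Lemma pbound : ~ (exists i, (0 < i)%N /\ p i = 1) ->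
  exists c : R, 0 <= c /\ c < 1 /\ forall m, (0 < m)%N -> p m <= c.
Proof.
move=> hn.
case: (pselect (exists m0, (0 < m0)%N /\ 2^-1 < p m0)) => [[m0 [h0 h1]]|hno].
  exists (p m0); split; first exact: p_ge0.
  split.
    rewrite lt_neqAle p_le1 // andbT; apply/eqP => e; apply: hn; by exists m0.
  move=> m mpos; case: (eqVneq m m0) => [-> //|ne].
  have := p_sum2 mpos h0 ne; lra.
exists 2^-1; split; first by rewrite invr_ge0.
split; first by rewrite invf_lt1 // ltr1n.
move=> m m0; rewrite leNgt; apply/negP => h; apply: hno; by exists m.
Qed.

Lemma no_atoms : ~ (exists i, (0 < i)%N /\ p i = 1) ->
  forall x : R, P (eta_series X @^-1` [set x]) = 0%E.
Proof.
move=> hn x; have [c [c0 [c1 hc]]] := pbound hn.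
case: (pselect (exists w0, eta_series X w0 = x)) => [[w0 hw0]|hno]; last first.
  rewrite (_ : _ @^-1` _ = set0) ?measure0 //; apply/seteqP; split => w //= hw.
  by apply: hno; exists w.
have E : eta_series X @^-1` [set x] = \bigcap_k X k @^-1` [set X k w0].
  apply/seteqP; split => w /=.
    move=> hw k _ /=; rewrite -hw0 !eta_F in hw.
    exact: (F_inj (aposX w) (aposX w0) hw k).
  move=> hw; rewrite -hw0 !eta_F; congr (F _ 0 _); apply/funext => j.
  exact: hw j I.
rewrite E; apply: (ereal_geo0 (measure_ge0 _ _) c0 c1) => n.
have sub : \bigcap_k X k @^-1` [set X k w0] `<=`
    \bigcap_(k in [set` index_iota 0 n]) X k @^-1` [set X k w0].
  by move=> w hw k _; exact: hw k I.
have hle : (P (\bigcap_k X k @^-1` [set X k w0]) <=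
    P (\bigcap_(k in [set` index_iota 0 n]) X k @^-1` [set X k w0]))%E.
  apply: le_measure sub.
  - by rewrite inE; apply: bigcapT_measurable => k; exact: mpre.
  - by rewrite inE; exact: mbigcap_seq.
have hI := Hind (fun k => [set X k w0]) (iota_uniq 0 (n - 0)).
cbv beta in hI; rewrite /index_iota hI in hle.
apply: le_trans hle _.
rewrite (eq_bigr (fun k => (p (X k w0))%:E)); last by move=> k _; rewrite Hlaw.
rewrite prodEFin lee_fin.
apply: le_trans (@ler_prod _ _ _ _ _ (fun _ => c) _) _.
  by move=> k _; rewrite p_ge0 // hc.
by rewrite prodr_const_nat subn0.
Qed.

Lemma degenerate : (exists i, (0 < i)%N /\ p i = 1) ->
  exists c : R, P (eta_series X @^-1` [set c]) = 1%E.
Proof.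
move=> [i [i0 pi]]; exists (F R 0 (fun _ => i)).
have ai : apos (fun _ => i) by move=> j.
have E : eta_series X @^-1` [set F R 0 (fun _ => i)] = \bigcap_k X k @^-1` [set i].
  apply/seteqP; split => w /=.
    by move=> hw k _; rewrite eta_F in hw; exact: (F_inj (aposX w) ai hw k).
  move=> hw; rewrite eta_F; congr (F _ 0 _); apply/funext => j.
  exact: hw j I.
rewrite E; apply: P_bigcap_one => k; first exact: mpre.
by rewrite Hlaw // pi.
Qed.

Lemma exists_m : (fun n : nat => \sum_(1 <= m < n) p m : R) @ \oo --> (1 : R) ->
  exists m, (0 < m)%N /\ 0 < p m.
Proof.
move=> Hs; apply: contrapT => hn.
have h0 : forall m, (0 < m)%N -> p m = 0.
  move=> m m0; apply/eqP; rewrite eq_le p_ge0 // andbT leNgt; apply/negP => h.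
  by apply: hn; exists m.
have e : (fun n : nat => \sum_(1 <= m < n) p m : R) = fun _ => 0.
  apply/funext => n; rewrite big_nat big1 // => m /andP[m0 _]; exact: h0.
rewrite e in Hs; have h1 : limn (fun=> (0:R)) = 1 by apply: cvg_lim.
rewrite lim_cst // in h1.
by move: h1 => /esym /eqP; rewrite oner_eq0.


Qed.

Definition nj (j : nat) := (j.+1 * j.+2)%N.

Lemma nj_inj : injective nj.
Proof.
move=> a b e; apply/eqP; apply: contraT => neq.
case: (ltngtP a b) neq => // h _.
  have : (nj a < nj b)%N by rewrite /nj ltn_mul.
  by rewrite e ltnn.
have : (nj b < nj a)%N by rewrite /nj ltn_mul.
by rewrite e ltnn.
Qed.

Lemma singular (m : nat) : (0 < m)%N -> 0 < p m ->
  exists N : set R, measurable N /\ (lebesgue_measure N = 0)%E /\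
    P (eta_series X @^-1` N) = 1%E.
Proof.
move=> m0 pm.
exists (\bigcap_J \bigcup_j @Aset R m (nj (J + j)) 0).
split.
  by apply: bigcapT_measurable => J; apply: bigcupT_measurable => j; exact: Aset_meas.
split.
  apply: ereal_harm0 => [|J]; first exact: measure_ge0.
  have sub : \bigcap_J \bigcup_j @Aset R m (nj (J + j)) 0 `<=` \bigcup_j @Aset R m (nj (J + j)) 0.
    by move=> x hx; exact: hx J I.
  have mU : measurable (\bigcup_j @Aset R m (nj (J + j)) 0).
    by apply: bigcupT_measurable => j; exact: Aset_meas.
  have hle : (lebesgue_measure (\bigcap_J \bigcup_j @Aset R m (nj (J + j)) 0) <=
      lebesgue_measure (\bigcup_j @Aset R m (nj (J + j)) 0))%E.
    apply: le_measure => //.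
    - by rewrite inE; apply: bigcapT_measurable => J'; apply: bigcupT_measurable => j; exact: Aset_meas.
    - by rewrite inE.
  apply: le_trans hle _.
  have hh : (lebesgue_measure (\bigcup_j @Aset R m (nj (J + j)) 0) <=
      \sum_(0 <= j <oo) lebesgue_measure (@Aset R m (nj (J + j)) 0))%E.
    by apply: measure_sigma_subadditive => // j; exact: Aset_meas.
  apply: le_trans hh _.
  have tb := tele_bound J (@ler01 R); rewrite mul1r in tb.
  apply: le_trans _ tb.
  apply: lee_nneseries => [j _ _|j _]; first exact: measure_ge0.
  apply: le_trans (Aset_mu _ _ _ m0) _.
  rewrite lee_fin div1r; apply: le_inv_nat; rewrite /nj; nia.

have E : eta_series X @^-1` (\bigcap_J \bigcup_j @Aset R m (nj (J + j)) 0) =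
    \bigcap_J \bigcup_j X (nj (J + j)) @^-1` [set m].
  apply/seteqP; split => w hw J _; have [j _ hj] := hw J I; exists j => //.
    exact: (Aset_mem R (nj (J + j)) 0 (aposX w) m0).1 hj.
  exact: (Aset_mem R (nj (J + j)) 0 (aposX w) m0).2 hj.
rewrite E; apply: P_bigcap_one => J.
  by apply: bigcupT_measurable => j; exact: mpre.
apply: P_one_of_C; first by apply: bigcupT_measurable => j; exact: mpre.
have hp1 := p_le1 m0.
apply: (@ereal_geo0 _ _ (1 - p m) (measure_ge0 _ _)) => [||K].
- by rewrite subr_ge0.
- by rewrite ltrBlDr ltrDl.
set sq := map (fun j => nj (J + j)) (index_iota 0 K).
have uq : uniq sq.
  rewrite map_inj_uniq ?iota_uniq // => a b /nj_inj; exact: addnI.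
have sub : ~` (\bigcup_j X (nj (J + j)) @^-1` [set m]) `<=`
    \bigcap_(k in [set` sq]) X k @^-1` (~` [set m]).
  move=> w hw k /= ks hx; have /mapP [j _ ekj] := ks.
  by apply: hw; exists j => //=; rewrite -ekj.
have hle : (P (~` (\bigcup_j X (nj (J + j)) @^-1` [set m])) <=
    P (\bigcap_(k in [set` sq]) X k @^-1` (~` [set m])))%E.
  apply: le_measure sub.
  - by rewrite inE; apply: measurableC; apply: bigcupT_measurable => j; exact: mpre.
  - by rewrite inE; exact: mbigcap_seq.
have hI := Hind (fun _ => ~` [set m]) uq.
cbv beta in hI; rewrite hI in hle.
apply: le_trans hle _.
rewrite (eq_bigr (fun _ => (1 - p m)%:E)); last first.
  move=> k _; rewrite -preimage_setC probability_setC; last exact: mpre.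
  by rewrite Hlaw.
rewrite prodEFin lee_fin big_map prodr_const_nat subn0.
by [].
Qed.
End Prob.


Unset Implicit Arguments.

Theorem theorem5 (d : measure_display) (T : measurableType d) (R : realType)
  (P : probability T R) (X : nat -> T -> nat) (p : nat -> R)
  (HXmeas : forall k, measurable_fun setT (X k))
  (HXpos : forall k w, (0 < X k w)%N)
  (Hp0 : forall m, 0 <= p m)
  (Hpsum : (fun n : nat => \sum_(1 <= m < n) p m : R) @ \oo --> (1 : R))
  (Hlaw : forall k m, (0 < m)%N -> P (X k @^-1` [set m]) = (p m)%:E)
  (Hind : mutually_independent_nat P X) :
  ((exists i, (0 < i)%N /\ p i = 1) ->
     exists c : R, P (eta_series X @^-1` [set c]) = 1%E)
  /\
  (~ (exists i, (0 < i)%N /\ p i = 1) ->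
     (forall x : R, P (eta_series X @^-1` [set x]) = 0%E) /\
     (exists N : set R, measurable N /\ (lebesgue_measure N = 0)%E /\
        P (eta_series X @^-1` N) = 1%E)).
Proof.
split; first exact: (degenerate HXmeas HXpos Hlaw).
move=> hn; split; first exact: (no_atoms HXmeas HXpos Hlaw Hind hn).
have [m [m0 pm]] := exists_m Hlaw Hpsum.
exact: (singular HXmeas HXpos Hlaw Hind m0 pm).
Qed.
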